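(* Assume (F), fix $\alpha\in\,]0,1[$, and let $0\le u^+<u^-\le V$ with $\hat\rho_{u^-}>\check\rho_{u^+}$. Then $\check\rho_{u^-}<\check\rho_{u^+}<\hat\rho_{u^-}<\hat\rho_{u^+}$ and $$u^--u^+\ \ge\ \frac{\beta}{2}\,\big(\check\rho_{u^+}-\check\rho_{u^-}\big).$$
   Context: Hypothesis (F): $R>0$; $f\in C^2([0,R];[0,+\infty))$ with $f(\rho)=\rho v(\rho)$, $v\in C^2([0,R];[0,+\infty))$; $f(0)=f(R)=0$; there are $B\ge\beta>0$ with $-B\le f''\le-\beta$ on $[0,R]$; $v'(\rho)<0$ for $\rho\in\,]0,R[$. Let $V:=\max_{[0,R]}v=v(0)$. Define $f_\alpha(\rho):=\alpha f(\rho/\alpha)$ for $\rho\in[0,\alpha R]$. For $u\in[0,V]$: $\tilde\rho_u$ is the unique solution of $f_\alpha'(\rho)=u$; $\varphi_u(\rho):=f_\alpha(\tilde\rho_u)+u(\rho-\tilde\rho_u)$ for $\rho\in[0,R]$; $\mathcal I_u:=\{\rho\in[0,R]: f(\rho)=\varphi_u(\rho)\}$, $\check\rho_u:=\min\mathcal I_u$, $\hat\rho_u:=\max\mathcal I_u$. *)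

(* Defs.v *)
From Stdlib Require Import Reals Lra.
Open Scope R_scope.

Definition Icc (a b : R) : R -> Prop := fun x => a <= x <= b.

(* g has derivative l at x, relative to the set D (one-sided at endpoints
   of an interval): limit of difference quotients along D \ {x}. *)
Definition derive_within (D : R -> Prop) (g : R -> R) (x l : R) : Prop :=
  limit1_in (fun y => (g y - g x) / (y - x)) (fun y => D y /\ y <> x) l x.

Definition cont_within (D : R -> Prop) (g : R -> R) (x : R) : Prop :=
  limit1_in g D (g x) x.

Definition C2_on (D : R -> Prop) (g g1 g2 : R -> R) : Prop :=
  forall x, D x ->
    derive_within D g x (g1 x) /\ derive_within D g1 x (g2 x) /\
    cont_within D g2 x.

Definition f_alpha (alpha : R) (f : R -> R) : R -> R :=
  fun rho => alpha * f (rho / alpha).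

(* phi_u(rho) = f_alpha(rt) + u (rho - rt), rt = tilde rho_u *)
Definition phi (alpha : R) (f : R -> R) (u rt : R) : R -> R :=
  fun rho => f_alpha alpha f rt + u * (rho - rt).

Definition Iset (Rr alpha : R) (f : R -> R) (u rt : R) : R -> Prop :=
  fun rho => 0 <= rho <= Rr /\ f rho = phi alpha f u rt rho.

Definition is_min (S : R -> Prop) (m : R) : Prop :=
  S m /\ forall y, S y -> m <= y.
Definition is_max (S : R -> Prop) (m : R) : Prop :=
  S m /\ forall y, S y -> y <= m.

(* Main.v *)
Require Import Defs.
From Stdlib Require Import Reals Lra.
Open Scope R_scope.

Definition clamp (a b x : R) := Rmax a (Rmin b x).

Lemma clamp_in a b x : a <= b -> a <= clamp a b x <= b.
Proof. intros; unfold clamp, Rmax, Rmin; repeat destruct Rle_dec; lra. Qed.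

Lemma clamp_id a b x : a <= x <= b -> clamp a b x = x.
Proof. intros; unfold clamp, Rmax, Rmin; repeat destruct Rle_dec; lra. Qed.

Lemma clamp_lip a b x y : a <= b -> Rabs (clamp a b y - clamp a b x) <= Rabs (y - x).
Proof.
  intros; unfold clamp, Rmax, Rmin; repeat destruct Rle_dec;
  unfold Rabs; repeat destruct Rcase_abs; lra.
Qed.

Lemma dw_interior Rr g x l : 0 < x < Rr -> derive_within (Icc 0 Rr) g x l ->
  derivable_pt_lim (fun t => g (clamp 0 Rr t)) x l.
Proof.
  intros Hx H eps Heps.
  destruct (H eps Heps) as [alp [Halp H1]].
  assert (Hp : 0 < Rmin alp (Rmin x (Rr - x))).
  { repeat apply Rmin_pos; lra. }
  exists (mkposreal _ Hp). simpl. intros h hne hlt.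
  assert (Hh1 : Rabs h < alp) by (eapply Rlt_le_trans; [exact hlt|apply Rmin_l]).
  assert (Hh2 : Rabs h < Rmin x (Rr - x)) by (eapply Rlt_le_trans; [exact hlt|apply Rmin_r]).
  assert (Hh3 : Rabs h < x) by (eapply Rlt_le_trans; [exact Hh2|apply Rmin_l]).
  assert (Hh4 : Rabs h < Rr - x) by (eapply Rlt_le_trans; [exact Hh2|apply Rmin_r]).
  assert (Hb : - Rabs h <= h <= Rabs h) by (unfold Rabs; destruct Rcase_abs; lra).
  rewrite (clamp_id 0 Rr (x + h)) by lra.
  rewrite (clamp_id 0 Rr x) by lra.
  specialize (H1 (x + h)). simpl in H1. unfold Rdist in H1.
  replace h with (x + h - x) at 2 by ring.
  apply H1. split; [split|].
  - unfold Icc; lra.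
  - lra.
  - replace (x + h - x) with h by ring; auto.
Qed.

Lemma cont_clamp Rr g x : 0 <= Rr -> Icc 0 Rr x -> cont_within (Icc 0 Rr) g x ->
  continuity_pt (fun t => g (clamp 0 Rr t)) x.
Proof.
  intros HR Hx H eps Heps.
  destruct (H eps Heps) as [alp [Halp H1]].
  exists alp; split; auto. intros y [_ Hy]. simpl in *. unfold Rdist in *.
  rewrite (clamp_id 0 Rr x) by exact Hx.
  apply H1. split.
  - unfold Icc. apply clamp_in; auto.
  - eapply Rle_lt_trans; [|exact Hy].
    rewrite <- (clamp_id 0 Rr x) at 1 by exact Hx. apply clamp_lip; auto.
Qed.

Lemma cont_of_dw D g x l : derive_within D g x l -> cont_within D g x.
Proof.
  intros H eps Heps.
  destruct (H 1 Rlt_0_1) as [alp [Halp H1]].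
  assert (Hp : 0 < eps / (Rabs l + 1)).
  { apply Rdiv_lt_0_compat; auto. pose proof (Rabs_pos l); lra. }
  exists (Rmin alp (eps / (Rabs l + 1))). split.
  { apply Rmin_pos; lra. }
  intros y [Dy Hy]. simpl in *. unfold Rdist in *.
  destruct (Req_dec y x) as [->|Hne].
  { replace (g x - g x) with 0 by ring. rewrite Rabs_R0; lra. }
  assert (Hy1 : Rabs (y - x) < alp) by (eapply Rlt_le_trans; [exact Hy|apply Rmin_l]).
  assert (Hy2 : Rabs (y - x) < eps / (Rabs l + 1)) by (eapply Rlt_le_trans; [exact Hy|apply Rmin_r]).
  specialize (H1 y (conj (conj Dy Hne) Hy1)).
  set (q := (g y - g x) / (y - x)) in *.
  assert (Hq : g y - g x = q * (y - x)).
  { unfold q; field. lra. }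
  rewrite Hq, Rabs_mult.
  assert (Rabs q <= Rabs l + 1).
  { replace q with ((q - l) + l) by ring.
    eapply Rle_trans; [apply Rabs_triang|]. lra. }
  assert (Hl : 0 < Rabs l + 1) by (pose proof (Rabs_pos l); lra).
  apply Rmult_lt_compat_l with (r := Rabs l + 1) in Hy2; auto.
  replace ((Rabs l + 1) * (eps / (Rabs l + 1))) with eps in Hy2 by (field; lra).
  pose proof (Rabs_pos (y - x)).
  apply Rle_lt_trans with ((Rabs l + 1) * Rabs (y - x)); auto.
  apply Rmult_le_compat_r; auto.
Qed.

Lemma mvt_lim k k' a b : a < b -> (forall c, a < c < b -> derivable_pt_lim k c (k' c)) ->
  (forall c, a <= c <= b -> continuity_pt k c) ->
  exists c, a < c < b /\ k b - k a = k' c * (b - a).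
Proof.
  intros Hab Hd Hc.
  assert (pr1 : forall c, a < c < b -> derivable_pt k c).
  { intros c Hc'. exists (k' c). apply Hd; auto. }
  assert (pr2 : forall c, a < c < b -> derivable_pt id c).
  { intros; apply derivable_pt_id. }
  destruct (MVT k id a b pr1 pr2 Hab Hc (fun c _ => derivable_continuous_pt _ _ (derivable_pt_id c))) as [c [P Heq]].
  exists c; split; auto.
  rewrite (derive_pt_eq_0 _ _ _ (pr1 c P) (Hd c P)) in Heq.
  rewrite (derive_pt_eq_0 _ _ _ (pr2 c P) (derivable_pt_lim_id c)) in Heq.
  unfold id in Heq. lra.
Qed.

Lemma dquad g c l a b : derivable_pt_lim g c l ->
  derivable_pt_lim (fun t => g t + a * t + b * (t * t)) c (l + a + 2 * b * c).
Proof.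
  intros H.
  assert (H1 : derivable_pt_lim (g + mult_real_fct a id + mult_real_fct b (id * id))%F c
      (l + a * 1 + b * (1 * id c + id c * 1))).
  { apply derivable_pt_lim_plus; [apply derivable_pt_lim_plus|].
    - exact H.
    - apply derivable_pt_lim_scal, derivable_pt_lim_id.
    - apply derivable_pt_lim_scal, derivable_pt_lim_mult; apply derivable_pt_lim_id. }
  unfold id in H1. replace (l + a + 2 * b * c) with (l + a * 1 + b * (1 * c + c * 1)) by ring.
  exact H1.
Qed.

Lemma cquad g c a b : continuity_pt g c ->
  continuity_pt (fun t => g t + a * t + b * (t * t)) c.
Proof.
  intros H.
  change (continuity_pt (g + mult_real_fct a id + mult_real_fct b (id * id))%F c).
  apply continuity_pt_plus; [apply continuity_pt_plus|]; auto.
  - apply continuity_pt_scal, derivable_continuous_pt, derivable_pt_id.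
  - apply continuity_pt_scal, continuity_pt_mult; apply derivable_continuous_pt, derivable_pt_id.
Qed.


Lemma Rmult_le_0_r_mine a b : a <= 0 -> 0 <= b -> a * b <= 0.
Proof. intros; nra. Qed.


Lemma kd1 (Rr beta : R) (f f1 f2 : R -> R) (HR : 0 < Rr) (HC : C2_on (Icc 0 Rr) f f1 f2) (Hf2 : forall x, Icc 0 Rr x -> f2 x <= - beta) c a b : 0 < c < Rr ->
  derivable_pt_lim (fun t => f1 (clamp 0 Rr t) + a * t + b * (t * t)) c (f2 c + a + 2 * b * c).
Proof.
  intros Hc. apply dquad. apply dw_interior; auto.
  apply (HC c). unfold Icc; lra.
Qed.

Lemma kc1 (Rr beta : R) (f f1 f2 : R -> R) (HR : 0 < Rr) (HC : C2_on (Icc 0 Rr) f f1 f2) (Hf2 : forall x, Icc 0 Rr x -> f2 x <= - beta) c a b : 0 <= c <= Rr ->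
  continuity_pt (fun t => f1 (clamp 0 Rr t) + a * t + b * (t * t)) c.
Proof.
  intros Hc. apply cquad. apply cont_clamp; [lra|exact Hc|].
  destruct (HC c Hc) as [_ [H _]]. eapply cont_of_dw; exact H.
Qed.

Lemma kd0 (Rr beta : R) (f f1 f2 : R -> R) (HR : 0 < Rr) (HC : C2_on (Icc 0 Rr) f f1 f2) (Hf2 : forall x, Icc 0 Rr x -> f2 x <= - beta) c a b : 0 < c < Rr ->
  derivable_pt_lim (fun t => f (clamp 0 Rr t) + a * t + b * (t * t)) c (f1 c + a + 2 * b * c).
Proof.
  intros Hc. apply dquad. apply dw_interior; auto.
  apply (HC c). unfold Icc; lra.
Qed.

Lemma kc0 (Rr beta : R) (f f1 f2 : R -> R) (HR : 0 < Rr) (HC : C2_on (Icc 0 Rr) f f1 f2) (Hf2 : forall x, Icc 0 Rr x -> f2 x <= - beta) c a b : 0 <= c <= Rr ->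
  continuity_pt (fun t => f (clamp 0 Rr t) + a * t + b * (t * t)) c.
Proof.
  intros Hc. apply cquad. apply cont_clamp; [lra|exact Hc|].
  destruct (HC c Hc) as [H _]. eapply cont_of_dw; exact H.
Qed.

Lemma lemM (Rr beta : R) (f f1 f2 : R -> R) (HR : 0 < Rr) (HC : C2_on (Icc 0 Rr) f f1 f2) (Hf2 : forall x, Icc 0 Rr x -> f2 x <= - beta) x y : 0 <= x -> x <= y -> y <= Rr -> f1 y - f1 x <= - beta * (y - x).
Proof.
  intros Hx Hxy Hy.
  destruct (Req_dec x y) as [->|Hne]; [lra|].
  destruct (mvt_lim (fun t => f1 (clamp 0 Rr t) + beta * t + 0 * (t * t))
     (fun c => f2 c + beta + 2 * 0 * c) x y) as [c [Hc Heq]].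
  - lra.
  - intros c Hc. apply (kd1 Rr beta f f1 f2 HR HC Hf2); lra.
  - intros c Hc. apply (kc1 Rr beta f f1 f2 HR HC Hf2); lra.
  - rewrite (clamp_id 0 Rr x) in Heq by (unfold Icc; lra).
    rewrite (clamp_id 0 Rr y) in Heq by (unfold Icc; lra).
    assert (f2 c <= - beta) by (apply Hf2; unfold Icc; lra).
    assert ((f2 c + beta + 2 * 0 * c) * (y - x) <= 0).
    { apply Rmult_le_0_r_mine; lra. }
    lra.
Qed.

Lemma lemQ (Rr beta : R) (f f1 f2 : R -> R) (HR : 0 < Rr) (HC : C2_on (Icc 0 Rr) f f1 f2) (Hf2 : forall x, Icc 0 Rr x -> f2 x <= - beta) x y : Icc 0 Rr x -> Icc 0 Rr y ->
  f y <= f x + f1 x * (y - x) - beta / 2 * ((y - x) * (y - x)).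
Proof.
  unfold Icc; intros Hx Hy.
  set (a := - f1 x - beta * x). set (b := beta / 2).
  set (k := fun t => f (clamp 0 Rr t) + a * t + b * (t * t)).
  assert (Hk : forall t, 0 <= t <= Rr -> k t = f t + a * t + b * (t * t)).
  { intros t Ht. unfold k. rewrite clamp_id by exact Ht. reflexivity. }
  assert (Hgoal : k y <= k x -> f y <= f x + f1 x * (y - x) - beta / 2 * ((y - x) * (y - x))).
  { rewrite !Hk by lra. unfold a, b. intros; nra. }
  apply Hgoal.
  destruct (Rtotal_order x y) as [Hlt|[->|Hgt]]; [| lra |].
  - destruct (mvt_lim k (fun c => f1 c + a + 2 * b * c) x y) as [c [Hc Heq]].
    + lra.
    + intros c Hc. apply (kd0 Rr beta f f1 f2 HR HC Hf2); lra.
    + intros c Hc. apply (kc0 Rr beta f f1 f2 HR HC Hf2); lra.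
    + pose proof (lemM Rr beta f f1 f2 HR HC Hf2 x c ltac:(lra) ltac:(lra) ltac:(lra)).
      assert ((f1 c + a + 2 * b * c) * (y - x) <= 0).
      { apply Rmult_le_0_r_mine; unfold a, b; lra. }
      lra.
  - destruct (mvt_lim k (fun c => f1 c + a + 2 * b * c) y x) as [c [Hc Heq]].
    + lra.
    + intros c Hc. apply (kd0 Rr beta f f1 f2 HR HC Hf2); lra.
    + intros c Hc. apply (kc0 Rr beta f f1 f2 HR HC Hf2); lra.
    + pose proof (lemM Rr beta f f1 f2 HR HC Hf2 c x ltac:(lra) ltac:(lra) ltac:(lra)).
      assert (0 <= (f1 c + a + 2 * b * c) * (x - y)).
      { apply Rmult_le_pos; unfold a, b; lra. }
      lra.
Qed.



Lemma ccl g c A u : continuity_pt g c -> continuity_pt (fun t => g t - (A + u * t)) c.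
Proof.
  intros H.
  change (continuity_pt (g - (fct_cte A + mult_real_fct u id))%F c).
  apply continuity_pt_minus; auto.
  apply continuity_pt_plus.
  - apply continuity_pt_const. intros ? ?; reflexivity.
  - apply continuity_pt_scal, derivable_continuous_pt, derivable_pt_id.
Qed.

Lemma zero_struct (G : R -> R) Rr (S : R -> Prop) c h :
  0 < Rr -> (forall t, 0 <= t <= Rr -> continuity_pt G t) -> G 0 <= 0 -> G Rr <= 0 ->
  (forall t, S t <-> (0 <= t <= Rr /\ G t = 0)) -> is_min S c -> is_max S h ->
  forall t, 0 <= t <= Rr -> 0 <= G t -> c <= t <= h.
Proof.
  intros HR Hc H0 HRr HS [Sc Hmin] [Sh Hmax] t Ht HG.
  destruct (Req_dec (G t) 0) as [Ez|Nz].
  { assert (S t) by (apply HS; auto). split; auto. }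
  assert (HGp : 0 < G t) by lra.
  split.
  - destruct (Rle_lt_dec c t) as [|Hlt]; auto. exfalso.
    destruct (Req_dec (G 0) 0) as [E0|N0].
    + assert (S 0) by (apply HS; split; [lra|auto]). specialize (Hmin 0 H). lra.
    + assert (0 < t) by (destruct (Req_dec t 0) as [->|]; lra).
      destruct (Ranalysis5.IVT_interv G 0 t) as [z [Hz Gz]].
      * intros a Ha; apply Hc; lra.
      * lra.
      * lra.
      * lra.
      * assert (S z) by (apply HS; split; [lra|auto]). specialize (Hmin z H1). lra.
  - destruct (Rle_lt_dec t h) as [|Hlt]; auto. exfalso.
    destruct (Req_dec (G Rr) 0) as [E0|N0].
    + assert (S Rr) by (apply HS; split; [lra|auto]). specialize (Hmax Rr H). lra.
    + assert (t < Rr) by (destruct (Req_dec t Rr) as [->|]; lra).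
      destruct (Ranalysis5.IVT_interv (fun x => - G x) t Rr) as [z [Hz Gz]].
      * intros a Ha. change (continuity_pt (- G)%F a). apply continuity_pt_opp, Hc; lra.
      * lra.
      * lra.
      * lra.
      * assert (S z) by (apply HS; split; [lra|lra]). specialize (Hmax z H1). lra.
Qed.

Lemma adh_int m r : 0 < m -> 0 <= r <= m -> adhDa (fun y => Icc 0 m y /\ y <> r) r.
Proof.
  intros Hm Hr alp Halp.
  destruct (Rlt_le_dec r m).
  - exists (r + Rmin alp (m - r) / 2).
    assert (0 < Rmin alp (m - r)) by (apply Rmin_pos; lra).
    pose proof (Rmin_l alp (m - r)); pose proof (Rmin_r alp (m - r)).
    unfold Icc, Rdist. split; [split; lra|].
    rewrite Rabs_right; lra.
  - exists (r - Rmin alp m / 2).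
    assert (0 < Rmin alp m) by (apply Rmin_pos; lra).
    pose proof (Rmin_l alp m); pose proof (Rmin_r alp m).
    unfold Icc, Rdist. split; [split; lra|].
    rewrite Rabs_left; lra.
Qed.

Lemma falpha_deriv Rr alpha f f1 f2 r u : 0 < alpha -> 0 < Rr -> C2_on (Icc 0 Rr) f f1 f2 ->
  Icc 0 (alpha * Rr) r -> derive_within (Icc 0 (alpha * Rr)) (f_alpha alpha f) r u ->
  f1 (r / alpha) = u.
Proof.
  intros Ha HR HC Hr Hd.
  assert (Hr' : Icc 0 Rr (r / alpha)).
  { unfold Icc in *. split. apply Rmult_le_pos; [lra| left; apply Rinv_0_lt_compat; lra].
    apply (Rmult_le_reg_l alpha); auto. field_simplify; lra. }
  destruct (HC _ Hr') as [H1 _].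
  assert (H2 : derive_within (Icc 0 (alpha * Rr)) (f_alpha alpha f) r (f1 (r / alpha))).
  { intros eps Heps. destruct (H1 eps Heps) as [alp [Halp H]].
    exists (alpha * alp). split; [apply Rmult_lt_0_compat; lra|].
    intros y [[Dy Ne] Hy]. simpl in *. unfold Rdist in *.
    assert (E : (f_alpha alpha f y - f_alpha alpha f r) / (y - r)
               = (f (y / alpha) - f (r / alpha)) / (y / alpha - r / alpha)).
    { unfold f_alpha. field. split; [lra|]. intro. apply Ne. lra. }
    rewrite E. apply H. split; [split|].
    - unfold Icc in *. split. apply Rmult_le_pos; [lra| left; apply Rinv_0_lt_compat; lra].
      apply (Rmult_le_reg_l alpha); auto. field_simplify; lra.
    - intro E2. apply Ne. apply (Rmult_eq_reg_r (/ alpha)); [|apply Rinv_neq_0_compat; lra].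
      exact E2.
    - replace (y / alpha - r / alpha) with ((y - r) * / alpha) by (field; lra).
      rewrite Rabs_mult, Rabs_inv, (Rabs_right alpha) by lra.
      apply (Rmult_lt_reg_r alpha); auto. replace (Rabs (y - r) * / alpha * alpha) with (Rabs (y - r)) by (field; lra). lra. }
  apply (single_limit _ _ _ _ r (adh_int (alpha * Rr) r ltac:(apply Rmult_lt_0_compat; lra) Hr) H2 Hd).
Qed.

Lemma chord Rr beta f f1 f2 A s x y z : 0 < Rr -> 0 < beta -> C2_on (Icc 0 Rr) f f1 f2 ->
  (forall x, Icc 0 Rr x -> f2 x <= - beta) ->
  0 <= x -> x < y -> y < z -> z <= Rr -> f x = A + s * x -> f z = A + s * z ->
  f y > A + s * y.
Proof.
  intros HR Hb HC Hf2 Hx Hxy Hyz Hz Ex Ez.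
  pose proof (lemQ Rr beta f f1 f2 HR HC Hf2 y x ltac:(unfold Icc; lra) ltac:(unfold Icc; lra)) as Q1.
  pose proof (lemQ Rr beta f f1 f2 HR HC Hf2 y z ltac:(unfold Icc; lra) ltac:(unfold Icc; lra)) as Q2.
  set (G := f y - A - s * y). set (p := f1 y - s).
  assert (I1 : 0 <= G - p * (y - x) - beta / 2 * ((y - x) * (y - x))) by (unfold G, p; lra).
  assert (I2 : 0 <= G + p * (z - y) - beta / 2 * ((z - y) * (z - y))) by (unfold G, p; nra).
  assert (I3 : 0 <= (z - x) * G - beta / 2 * (y - x) * (z - y) * (z - x)) by nra.
  assert (0 < beta / 2 * (y - x) * (z - y) * (z - x)).
  { repeat apply Rmult_lt_0_compat; lra. }
  assert (0 < (z - x) * G) by lra.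
  assert (0 < G) by nra.
  unfold G in *; lra.
Qed.


Lemma ZS_app Rr alpha f f1 f2 u r c h : 0 < Rr -> C2_on (Icc 0 Rr) f f1 f2 ->
  f 0 = 0 -> f Rr = 0 ->
  0 <= f_alpha alpha f r - u * r -> 0 <= f_alpha alpha f r - u * r + u * Rr ->
  is_min (Iset Rr alpha f u r) c -> is_max (Iset Rr alpha f u r) h ->
  (forall t, 0 <= t <= Rr -> f_alpha alpha f r - u * r + u * t <= f t -> c <= t <= h) /\
  (0 <= c <= Rr /\ f c = f_alpha alpha f r - u * r + u * c) /\
  (0 <= h <= Rr /\ f h = f_alpha alpha f r - u * r + u * h).
Proof.
  intros HR HC H0 HRr HA0 HAR Hc Hh.
  set (A := f_alpha alpha f r - u * r) in *.
  assert (Hphi : forall t, phi alpha f u r t = A + u * t) by (intros; unfold phi, A; ring).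
  assert (HS : forall t, Iset Rr alpha f u r t <->
     (0 <= t <= Rr /\ (fun t => f (clamp 0 Rr t) - (A + u * t)) t = 0)).
  { intros t; unfold Iset; rewrite Hphi; split.
    - intros [Ht E]; split; auto. rewrite clamp_id by exact Ht. lra.
    - intros [Ht E]; split; auto. rewrite clamp_id in E by exact Ht. lra. }
  pose proof Hc as [[Ic Ec] _]. pose proof Hh as [[Ih Eh] _].
  rewrite Hphi in Ec, Eh.
  split; [|split; split; auto].
  intros t Ht Hle.
  apply (zero_struct (fun t => f (clamp 0 Rr t) - (A + u * t)) Rr (Iset Rr alpha f u r) c h HR); auto.
  - intros x Hx. apply ccl. apply cont_clamp; [lra|exact Hx|].
    destruct (HC x Hx) as [Hd _]. eapply cont_of_dw; exact Hd.
  - simpl. rewrite clamp_id by lra. lra.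
  - simpl. rewrite clamp_id by lra. lra.
  - simpl. rewrite clamp_id by lra. lra.
Qed.


Theorem mainTheorem6
  (Rr B beta : R) (f f1 f2 v v1 v2 : R -> R)
  (HR : 0 < Rr)
  (Hf_nonneg : forall x, Icc 0 Rr x -> 0 <= f x)
  (Hv_nonneg : forall x, Icc 0 Rr x -> 0 <= v x)
  (Hfv : forall x, Icc 0 Rr x -> f x = x * v x)
  (Hf_C2 : C2_on (Icc 0 Rr) f f1 f2)
  (Hv_C2 : C2_on (Icc 0 Rr) v v1 v2)
  (Hf0 : f 0 = 0) (HfR : f Rr = 0)
  (Hbeta : 0 < beta) (HbB : beta <= B)
  (Hf2 : forall x, Icc 0 Rr x -> - B <= f2 x <= - beta)
  (Hv1 : forall x, 0 < x < Rr -> v1 x < 0)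
  (alpha : R) (Halpha : 0 < alpha < 1)
  (up um : R) (Hu : 0 <= up /\ up < um /\ um <= v 0)
  (rtp rtm : R)
  (Hrtp : Icc 0 (alpha * Rr) rtp /\
          derive_within (Icc 0 (alpha * Rr)) (f_alpha alpha f) rtp up)
  (Hrtm : Icc 0 (alpha * Rr) rtm /\
          derive_within (Icc 0 (alpha * Rr)) (f_alpha alpha f) rtm um)
  (cp hp cm hm : R)
  (Hcp : is_min (Iset Rr alpha f up rtp) cp)
  (Hhp : is_max (Iset Rr alpha f up rtp) hp)
  (Hcm : is_min (Iset Rr alpha f um rtm) cm)
  (Hhm : is_max (Iset Rr alpha f um rtm) hm)
  (Hgap : hm > cp) :
  (cm < cp /\ cp < hm /\ hm < hp) /\ um - up >= beta / 2 * (cp - cm).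
Proof.
  destruct Hu as [Hup [Hupm Humv]].
  destruct Hrtp as [Irtp Drtp]. destruct Hrtm as [Irtm Drtm].
  assert (Hf2' : forall x, Icc 0 Rr x -> f2 x <= - beta) by (intros x Hx; apply Hf2; auto).
  pose proof (lemQ Rr beta f f1 f2 HR Hf_C2 Hf2') as Q.
  pose proof (lemM Rr beta f f1 f2 HR Hf_C2 Hf2') as M.
  pose proof (falpha_deriv Rr alpha f f1 f2 rtp up ltac:(lra) HR Hf_C2 Irtp Drtp) as Fp.
  pose proof (falpha_deriv Rr alpha f f1 f2 rtm um ltac:(lra) HR Hf_C2 Irtm Drtm) as Fm.
  assert (Hch : forall A s x y z, 0 <= x -> x < y -> y < z -> z <= Rr ->
      f x = A + s * x -> f z = A + s * z -> f y > A + s * y).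
  { intros A s x y z H1 H2 H3 H4 H5 H6. exact (chord Rr beta f f1 f2 A s x y z HR Hbeta Hf_C2 Hf2' H1 H2 H3 H4 H5 H6). }
  set (qp := rtp / alpha) in *. set (qm := rtm / alpha) in *.
  assert (Ep : rtp = alpha * qp) by (unfold qp; field; lra).
  assert (Em : rtm = alpha * qm) by (unfold qm; field; lra).
  assert (Iqp : 0 <= qp <= Rr).
  { unfold Icc in Irtp; rewrite Ep in Irtp. destruct Irtp.
    split; [nra|]. apply (Rmult_le_reg_l alpha); lra. }
  assert (Iqm : 0 <= qm <= Rr).
  { unfold Icc in Irtm; rewrite Em in Irtm. destruct Irtm.
    split; [nra|]. apply (Rmult_le_reg_l alpha); lra. }
  assert (Fap : f_alpha alpha f rtp = alpha * f qp).
  { unfold f_alpha. fold qp. reflexivity. }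
  assert (Fam : f_alpha alpha f rtm = alpha * f qm).
  { unfold f_alpha. fold qm. reflexivity. }
  set (Ap := f_alpha alpha f rtp - up * rtp) in *.
  set (Am := f_alpha alpha f rtm - um * rtm) in *.
  assert (EAp : Ap = alpha * f qp - up * (alpha * qp)) by (unfold Ap; rewrite Fap, Ep; ring).
  assert (EAm : Am = alpha * f qm - um * (alpha * qm)) by (unfold Am; rewrite Fam, Em; ring).
  assert (TI : forall p q u, 0 <= p <= Rr -> 0 <= q <= Rr -> f1 q = u ->
     alpha * f p <= alpha * f q + alpha * u * (p - q) - alpha * (beta / 2) * ((p - q) * (p - q))).
  { intros p q u Hp Hq Hu. pose proof (Q q p ltac:(unfold Icc; lra) ltac:(unfold Icc; lra)).
    rewrite Hu in H. nra. }
  assert (SI : forall x, 0 <= x <= Rr ->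
     f (alpha * x) >= alpha * f x + beta / 2 * alpha * (1 - alpha) * (x * x)).
  { intros x Hx.
    assert (Hax : 0 <= alpha * x <= Rr) by nra.
    pose proof (Q (alpha * x) x ltac:(unfold Icc; lra) ltac:(unfold Icc; lra)) as Q1.
    pose proof (Q (alpha * x) 0 ltac:(unfold Icc; lra) ltac:(unfold Icc; lra)) as Q2.
    rewrite Hf0 in Q2.
    assert (Q1' := Rmult_le_compat_l alpha _ _ ltac:(lra) Q1).
    assert (Q2' := Rmult_le_compat_l (1 - alpha) _ _ ltac:(lra) Q2).
    lra. }
  assert (Hq : qm < qp).
  { destruct (Rlt_le_dec qm qp) as [|Hle]; auto.
    pose proof (M qp qm ltac:(lra) Hle ltac:(lra)). nra. }
  set (D := um - up).
  assert (HD : 0 < D) by (unfold D; lra).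
  set (rs := (Ap - Am) / D).
  assert (Ers : Ap - Am = D * rs) by (unfold rs; field; lra).
  assert (Hb1 : rtm <= rs).
  { pose proof (TI qm qp up Iqm Iqp Fp).
    assert (0 <= alpha * (beta / 2) * ((qm - qp) * (qm - qp))).
    { apply Rmult_le_pos; [nra|]. nra. }
    assert (D * rtm <= D * rs) by (rewrite Em, <- Ers, EAp, EAm; unfold D; lra).
    nra. }
  assert (Hb2 : rs < rtp).
  { pose proof (TI qp qm um Iqp Iqm Fm).
    assert (0 < alpha * (beta / 2) * ((qp - qm) * (qp - qm))).
    { apply Rmult_lt_0_compat; [nra|]. nra. }
    assert (D * rs < D * rtp) by (rewrite Ep, <- Ers, EAp, EAm; unfold D; lra).
    nra. }
  assert (HaR : alpha * Rr <= Rr) by nra.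
  assert (A0 : forall q u, 0 <= q <= Rr -> f1 q = u -> 0 <= u ->
     0 <= alpha * f q - u * (alpha * q) /\ 0 <= alpha * f q - u * (alpha * q) + u * Rr).
  { intros q u Hqq Hu Hu0.
    pose proof (TI 0 q u ltac:(lra) Hqq Hu) as T0. rewrite Hf0 in T0.
    pose proof (TI Rr q u ltac:(lra) Hqq Hu) as T1. rewrite HfR in T1.
    assert (0 <= alpha * (beta / 2) * ((0 - q) * (0 - q))).
    { apply Rmult_le_pos; [nra|]. nra. }
    assert (0 <= alpha * (beta / 2) * ((Rr - q) * (Rr - q))).
    { apply Rmult_le_pos; [nra|]. nra. }
    assert (0 <= (1 - alpha) * (u * Rr)).
    { apply Rmult_le_pos; [lra|]. nra. }
    split; lra. }
  destruct (A0 qp up Iqp Fp Hup) as [Ap0 ApR].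
  destruct (A0 qm um Iqm Fm ltac:(lra)) as [Am0 AmR].
  rewrite <- EAp in Ap0, ApR. rewrite <- EAm in Am0, AmR.
  destruct (ZS_app Rr alpha f f1 f2 up rtp cp hp HR Hf_C2 Hf0 HfR Ap0 ApR Hcp Hhp)
    as [ZSp [[Icp Ecp] [Ihp Ehp]]].
  destruct (ZS_app Rr alpha f f1 f2 um rtm cm hm HR Hf_C2 Hf0 HfR Am0 AmR Hcm Hhm)
    as [ZSm [[Icm Ecm] [Ihm Ehm]]].
  fold Ap in ZSp, Ecp, Ehp. fold Am in ZSm, Ecm, Ehm.
  assert (Hrtp_in : cp <= rtp <= hp).
  { apply ZSp. unfold Icc in Irtp; lra.
    pose proof (SI qp Iqp). rewrite EAp, Ep.
    assert (0 <= beta / 2 * alpha * (1 - alpha) * (qp * qp)).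
    { apply Rmult_le_pos; [|nra]. apply Rmult_le_pos; [|lra]. nra. }
    lra. }
  assert (Hrtm_in : cm <= rtm <= hm).
  { apply ZSm. unfold Icc in Irtm; lra.
    pose proof (SI qm Iqm). rewrite EAm, Em.
    assert (0 <= beta / 2 * alpha * (1 - alpha) * (qm * qm)).
    { apply Rmult_le_pos; [|nra]. apply Rmult_le_pos; [|lra]. nra. }
    lra. }
  assert (He : cp < rs).
  { destruct (Rlt_le_dec cp rs) as [|Hle]; auto. exfalso.
    assert (Hcc : cp <= cm).
    { destruct (Rle_lt_dec cp cm) as [|Hlt]; auto. exfalso.
      pose proof (Hch Am um cm cp hm ltac:(lra) Hlt Hgap ltac:(lra) Ecm Ehm).
      assert (D * (cp - rs) >= 0) by nra.
      unfold D in *. lra. }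
    assert (E1 : rtm = cm) by lra.
    assert (Hqm0 : qm = 0).
    { pose proof (SI qm Iqm). rewrite <- Em, E1, Ecm in H.
      rewrite EAm, <- E1, Em in H.
      assert (beta / 2 * alpha * (1 - alpha) * (qm * qm) <= 0) by lra.
      assert (0 < beta / 2 * alpha * (1 - alpha)).
      { apply Rmult_lt_0_compat; [|lra]. apply Rmult_lt_0_compat; lra. }
      assert (qm * qm <= 0).
      { destruct (Rle_lt_dec (qm * qm) 0); auto. exfalso.
        pose proof (Rmult_lt_0_compat _ _ H1 r). lra. }
      nra. }
    assert (Hrt0 : rtm = 0) by (rewrite Em, Hqm0; ring).
    assert (Hrs0 : rs = 0) by lra.
    assert (Am = 0) by (rewrite EAm, Hqm0, Hf0; ring).
    assert (Ap = 0) by (rewrite Hrs0 in Ers; lra).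
    pose proof (TI 0 qp up ltac:(lra) Iqp Fp) as T0. rewrite Hf0 in T0.
    assert (alpha * (beta / 2) * (qp * qp) <= 0) by nra.
    assert (Hab : 0 < alpha * (beta / 2)) by nra.
    assert (Hqq : 0 < qp * qp) by (apply Rmult_lt_0_compat; lra).
    pose proof (Rmult_lt_0_compat _ _ Hab Hqq). lra. }
  assert (Hf : cm < cp).
  { assert (f cp - (Am + um * cp) = D * (rs - cp)) by (unfold D in *; lra).
    assert (0 < D * (rs - cp)) by nra.
    destruct (ZSm cp ltac:(lra) ltac:(lra)) as [H1 H2].
    destruct (Req_dec cm cp) as [E|]; [|lra].
    rewrite E in Ecm. lra. }
  assert (Hg : rs < hm).
  { destruct (Rlt_le_dec rs hm) as [|Hle]; auto. exfalso.
    assert (Irs : 0 <= rs <= Rr) by (unfold Icc in Irtm, Irtp; lra).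
    assert (f rs <= Am + um * rs).
    { destruct (Rle_lt_dec (f rs) (Am + um * rs)) as [|Hlt]; auto.
      destruct (ZSm rs Irs ltac:(lra)). assert (Erh : rs = hm) by lra. rewrite Erh in Hlt. lra. }
    pose proof (Hch Ap up cp rs hp ltac:(lra) He ltac:(lra) ltac:(lra) Ecp Ehp).
    unfold D in *. nra. }
  assert (Hh : hm < hp).
  { assert (f hm - (Ap + up * hm) = D * (hm - rs)) by (unfold D in *; lra).
    assert (0 < D * (hm - rs)) by nra.
    destruct (ZSp hm ltac:(lra) ltac:(lra)) as [H1 H2].
    destruct (Req_dec hm hp) as [E|]; [|lra].
    rewrite <- E in Ehp. lra. }
  split; [lra|].
  assert (Hcq : cp <= qp) by nra.
  pose proof (Q cp cm ltac:(unfold Icc; lra) ltac:(unfold Icc; lra)) as Q1.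
  pose proof (M cp qp ltac:(lra) Hcq ltac:(lra)) as M1. rewrite Fp in M1.
  set (d := cp - cm) in *.
  assert (K1 : D * (rs - cm) >= beta * (qp - cp) * d + beta / 2 * (d * d)).
  { assert (D * (rs - cm) = Ap + up * cm - f cm) by (unfold D in *; lra).
    unfold d in *. nra. }
  assert (K2 : 2 * qp >= rs + cp) by nra.
  assert (K3 : (rs - cm) * (D - beta / 2 * d) >= 0).
  { assert (0 < d) by (unfold d; lra).
    assert (0 <= (beta / 2 * d) * (2 * qp - cp - rs)) by (apply Rmult_le_pos; nra).
    unfold d in *. lra. }
  assert (0 < rs - cm) by lra.
  assert (D - beta / 2 * d >= 0).
  { destruct (Rge_or_gt (D - beta / 2 * d) 0) as [|Hlt]; auto.
    assert (0 < (rs - cm) * (- (D - beta / 2 * d))) by (apply Rmult_lt_0_compat; lra). lra. }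
  unfold D, d in *. lra.
Qed.
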